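(* Consider the multi-agent setting described in the context, with parameters $\alpha>0$ and $F\in\mathbb Z_{\ge0}$. Assume: - the set $\mathcal A$ of misbehaving agents is $F$-local; - the digraph $\mathcal D$ is $(2F+1)$-robust. Then the normal agents achieve Finite-Time Resilient Consensus. That is, for trajectories $x_{\mathcal N}:[0,\infty)\to\mathbb R^{|\mathcal N|}$ of the normal agents: (i) $x_i(t)\in[m(x_{\mathcal N}(0)),M(x_{\mathcal N}(0))]$ for all $t\ge0$ and all $i\in\mathcal N$; (ii) there exists $T:\mathbb R^{|\mathcal N|}\to\mathbb R_{\ge0}$ such that $V(x_{\mathcal N}(t))=0$, equivalently $x_{\mathcal N}(t)\in\mathrm{span}(\mathbf 1)$, for all $t\ge T(x_{\mathcal N}(0))$.
   Context: Setting. Let $\mathcal D=(\mathcal V,\mathcal E)$ be a digraph with $\mathcal V=\{1,\dots,n\}$ and $n\ge2$. An edge $(i,j)\in\mathcal E$ means that agent $j$ receives information from agent $i$. The in-neighbor set of $i$ is $\mathcal V_i=\{j:(j,i)\in\mathcal E\}$, and $\mathcal J_i=\mathcal V_i\cup\{i\}$. - A nonempty $S\subset\mathcal V$ is $r$-reachable if some $i\in S$ has $|\mathcal V_i\setminus S|\ge r$. - $\mathcal D$ is $r$-robust if for every pair of nonempty disjoint subsets of $\mathcal V$, at least one of them is $r$-reachable. Dynamics and communication. Each agent has a scalar state with $\dot x_i(t)=u_i(t)$, with initial time $0$. Fix a strictly increasing $g:\mathbb R\to\mathbb R$ (not necessarily continuous). At time $t$, agent $i$ receives from each in-neighbor $j$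 a value $g(x^i_j(t))$. The agents are partitioned into normal agents $\mathcal N$ and misbehaving agents $\mathcal A$. - A normal agent $j$ sends $g(x_j(t))$ to all its out-neighbors, so $x^i_j=x_j$, and updates via the FTRC protocol. - Misbehaving agents may use arbitrary inputs and may send arbitrary, possibly different, values to different out-neighbors. The only restriction is that $t\mapsto g(x^i_k(t))$ is Lebesgue measurable for all $k\in\mathcal A$ and $i\in\mathcal N$. - $\mathcal A$ is $F$-local if $|\mathcal V_i\cap\mathcal A|\le F$ for every $i\in\mathcal V\setminus\mathcal A$. FTRC protocol for a normal agent $i$ at time $t$: 1. Sort the received values $g(x^i_j(t))$, $j\in\mathcal V_i$. 2. If fewer than $F$ values are strictly larger than $g(x_i(t))$, remove all values strictly larger than $g(x_i(t))$; otherwise remove exactly the $F$ largest values. 3. Likewise, if fewer than $F$ values are strictly smaller than $g(x_i(t))$, remove all values strictly smaller; otherwise remove exactly the $F$ smallest values. 4. With $\mathcal R_i(t)$ the set of agents whose values were removed, set $u_i(t)=\alpha\,\mathrm{sign}\big(\sum_{j\in\mathcal J_i\setminus\mathcal R_i(t)}(g(x^i_j(t))-g(x_i(t)))\big)$, where $x^i_i=x_i$ and $\mathrm{sign}(0)=0$. Trajectories and auxiliary functions. Write $x_{\mathcal N}=(x_{\mathcal N_1},\dots,x_{\mathcal N_{|\mathcal N|}})^T$ for a fixed ordering of $\mathcal N$. A trajectory of the normal agents on an interval $I\ni0$ is an absolutely continuous $x_{\mathcal N}:I\to\mathbb R^{|\mathcal N|}$ with $\dot x_{\mathcal N_k}(t)=u_{\mathcal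 N_k}(t)$ for all $k$ and almost every $t\in I$. For $x\in\mathbb R^{|\mathcal N|}$, set $M(x)=\max_k x_k$, $m(x)=\min_k x_k$ and $V(x)=M(x)-m(x)$. Here $\mathbf 1$ is the all-ones vector. *)

(* Defs.v *)
From mathcomp Require Import all_boot all_order all_algebra.
From mathcomp Require Import all_classical all_reals all_analysis.
Import Order.TTheory GRing.Theory Num.Theory numFieldNormedType.Exports.

Set Implicit Arguments.
Unset Strict Implicit.
Unset Printing Implicit Defensive.

Local Open Scope ring_scope.

Section FTRC.
Variable R : realType.
Variable n : nat.

(* E j i  means (j,i) is an edge: agent i receives information from agent j *)

Definition in_nbrs (E : rel 'I_n) (i : 'I_n) : {set 'I_n} := [set j | E j i].

Definition r_reachable (E : rel 'I_n) (S : {set 'I_n}) (r : nat) : Prop :=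
  exists2 i, i \in S & (r <= #|in_nbrs E i :\: S|)%N.

Definition r_robust (E : rel 'I_n) (r : nat) : Prop :=
  forall S1 S2 : {set 'I_n}, S1 != finset.set0 -> S2 != finset.set0 -> [disjoint S1 & S2] ->
    r_reachable E S1 r \/ r_reachable E S2 r.

Definition F_local (E : rel 'I_n) (A : {set 'I_n}) (F : nat) : Prop :=
  forall i, i \notin A -> (#|in_nbrs E i :&: A| <= F)%N.

(* x t j : state of (normal) agent j at time t;
   y t i k : the value x^i_k(t) that misbehaving agent k pretends to agent i.
   Received value by i from j at time t: g(x^i_j(t)). *)
Definition recv (N : {set 'I_n}) (g : R -> R) (x : R -> 'I_n -> R)
  (y : R -> 'I_n -> 'I_n -> R) (t : R) (i j : 'I_n) : R :=
  if j \in N then g (x t j) else g (y t i j).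

(* The received values are sorted increasingly; the min(#larger, F) largest
   values (all strictly larger than g(x_i)) and the min(#smaller, F) smallest
   values (all strictly smaller than g(x_i)) are removed; the remaining values
   together with the agent's own value (j = i, contributing 0) are summed. *)
Definition ftrc_input (E : rel 'I_n) (N : {set 'I_n}) (F : nat) (alpha : R)
  (g : R -> R) (x : R -> 'I_n -> R) (y : R -> 'I_n -> 'I_n -> R)
  (t : R) (i : 'I_n) : R :=
  let own := g (x t i) in
  let s := sort <=%R [seq recv N g x y t i j | j <- enum (in_nbrs E i)] in
  let nsmall := minn (count (fun v => v < own) s) F in
  let nlarge := minn (count (fun v => own < v) s) F in
  let kept := drop nsmall (take (size s - nlarge) s) in
  alpha * Num.sg (\sum_(v <- own :: kept) (v - own)).

Local Open Scope classical_set_scope.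
Definition lebesgue_measurable_set (A : set R) : Prop :=
  ((wlength (R:=R) idfun)^*%mu).-cara.-measurable A.

Definition lebesgue_measurable_fun (D : set R) (f : R -> R) : Prop :=
  lebesgue_measurable_set D /\
  forall B : set R, measurable B -> lebesgue_measurable_set (D `&` f @^-1` B).

Definition abs_cont_on (a b : R) (f : R -> R) : Prop :=
  forall e : R, 0 < e -> exists2 d : R, 0 < d &
    forall (k : nat) (s u : 'I_k -> R),
      (forall p, a <= s p /\ s p <= u p /\ u p <= b) ->
      (forall p q, p != q -> u p <= s q \/ u q <= s p) ->
      \sum_p (u p - s p) < d ->
      \sum_p `|f (u p) - f (s p)| < e.

Definition ftrc_trajectory (E : rel 'I_n) (N : {set 'I_n}) (F : nat)
  (alpha : R) (g : R -> R) (y : R -> 'I_n -> 'I_n -> R)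
  (x : R -> 'I_n -> R) : Prop :=
  forall k, k \in N ->
    (forall b : R, 0 <= b -> abs_cont_on 0 b (fun t => x t k)) /\
    {ae (@lebesgue_measure R), forall t : R, 0 < t ->
       is_derive t (1 : R) (fun s => x s k) (ftrc_input E N F alpha g x y t k)}.

Definition normal_agent (N : {set 'I_n}) := {i : 'I_n | i \in N}.

Definition stateN (N : {set 'I_n}) (x : R -> 'I_n -> R) (t : R)
  : {ffun normal_agent N -> R} :=
  [ffun i : normal_agent N => x t (sval i)].

(* max / min of the entries of a vector (convention 0 for the empty vector) *)
Definition Mvec (S : finType) (v : {ffun S -> R}) : R :=
  \big[Num.max/head 0 (codom v)]_(a <- codom v) a.
Definition mvec (S : finType) (v : {ffun S -> R}) : R :=
  \big[Num.min/head 0 (codom v)]_(a <- codom v) a.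
Definition Vvec (S : finType) (v : {ffun S -> R}) : R := Mvec v - mvec v.

End FTRC.

(* Main.v *)
Require Import Defs.
From mathcomp Require Import all_boot all_order all_algebra.
From mathcomp Require Import all_classical all_reals all_analysis.
From mathcomp Require Import measurable_realfun.
From mathcomp Require Import ring lra zify.
Import Order.TTheory GRing.Theory Num.Theory numFieldNormedType.Exports.
Local Open Scope classical_set_scope.
Local Open Scope ring_scope.

Section Aux.
Variable R : realType.
Set Implicit Arguments.
Unset Strict Implicit.
Implicit Types (a b c : R) (h : R -> R).

Lemma ac_list a b h : abs_cont_on a b h -> forall e : R, 0 < e ->
  exists2 d : R, 0 < d & forall L : seq (R * R),
    pairwise (fun p q => p.2 <= q.1) L ->
    (forall p, p \in L -> a <= p.1 /\ p.1 <= p.2 /\ p.2 <= b) ->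
    \sum_(p <- L) (p.2 - p.1) < d -> \sum_(p <- L) `|h p.2 - h p.1| < e.
Proof.
move=> hac e e0; have [d d0 hd] := hac e e0; exists d => // L pw inL sL.
pose s (p : 'I_(size L)) := (nth (0,0) L p).1.
pose u (p : 'I_(size L)) := (nth (0,0) L p).2.
have ->: \sum_(p <- L) `|h p.2 - h p.1| = \sum_p `|h (u p) - h (s p)|.
  by rewrite (big_nth (0,0)) big_mkord.
apply: hd.
- by move=> p; apply: inL; rewrite mem_nth.
- move=> p q pq; have /pairwiseP P := pw.
  case: (ltngtP p q) => [lpq|lqp|epq].
  + by left; apply: (P (0,0)) => //; rewrite inE.
  + by right; apply: (P (0,0)) => //; rewrite inE.
  + by move: pq; rewrite (val_inj epq) eqxx.
- by move: sL; rewrite (big_nth (0,0)) big_mkord.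
Qed.
End Aux.

Section Core.
Variable R : realType.
Set Implicit Arguments.
Unset Strict Implicit.
Implicit Types (a b c : R) (h : R -> R).
Local Notation mu := (@lebesgue_measure R).

Definition DqL h (t c : R) := forall e : R, 0 < e -> exists2 r : R, 0 < r &
  forall s, t - r < s -> s <= t -> h t - h s <= (c + e) * (t - s).

Definition InvL b c eps (U : set R) h eta x := exists L : seq (R * R),
  [/\ pairwise (fun p q => p.2 <= q.1) L,
      (forall p, p \in L -> x <= p.1 /\ p.1 <= p.2 /\ p.2 <= b),
      ((\sum_(p <- L) (p.2 - p.1))%:E <= mu (U `&` `]x, b]%classic))%E &
      h b - h x - (c + eps) * (b - x) <=
        \sum_(p <- L) (`|h p.2 - h p.1| + `|c + eps| * (p.2 - p.1)) + eta].

Lemma invL_start b c eps U h eta : 0 <= eta -> InvL b c eps U h eta b.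
Proof.
move=> eta0; exists [::]; split => //; first by rewrite big_nil measure_ge0.
by rewrite big_nil !subrr mulr0 subr0 add0r.
Qed.

Lemma mUI (U : set R) x b : open U -> measurable (U `&` `]x, b]%classic).
Proof. by move=> oU; apply: measurableI; [exact: open_measurable|exact: measurable_itv]. Qed.

Lemma invL_good b c eps U h eta eta' eta2 x y : open U -> InvL b c eps U h eta x ->
  y <= x -> h x - h y <= (c + eps) * (x - y) + eta' -> eta + eta' <= eta2 ->
  InvL b c eps U h eta2 y.
Proof.
move=> oU [L [pw inL mL ineq]] yx hx ee; exists L; split => //.
- move=> p /inL [? [? ?]]; split => //; exact: le_trans yx _.
- apply: (le_trans mL); apply: le_measure; rewrite ?inE; try exact: mUI.
  move=> z [Uz] /=; rewrite in_itv /= => /andP[xz zb]; split => //=.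
  by rewrite in_itv /= zb (le_lt_trans yx xz).
- lra.
Qed.

Lemma sub_auxL (U : set R) y x b : y <= x -> x <= b -> `]y, x] `<=` U ->
  `]y, x] `|` (U `&` `]x, b]) `<=` U `&` `]y, b].
Proof.
move=> yx xb yxU z [/=|[Uz] /=]; rewrite in_itv /=.
  move=> /andP[yz zx]; split; first by apply: yxU; rewrite /= in_itv /= yz.
  by rewrite /= in_itv /= yz (le_trans zx xb).
move=> /andP[xz zb]; split => //=; rewrite in_itv /= zb andbT.
exact: le_lt_trans yx xz.
Qed.

Lemma invL_bad b c eps U h eta x y : open U -> InvL b c eps U h eta x ->
  y <= x -> x <= b -> `]y, x] `<=` U -> InvL b c eps U h eta y.
Proof.
move=> oU [L [pw inL mL ineq]] yx xb yxU; exists ((y, x) :: L); split => //.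
- rewrite /= pw andbT; apply/allP => p /inL [-> _] //.
- move=> p; rewrite inE => /predU1P[->|/inL [? [? ?]]] //=.
  split => //; exact: le_trans yx _.
- rewrite big_cons /= EFinD.
  have mI : measurable (`]y, x] : set R) by exact: measurable_itv.
  have -> : ((x - y)%:E = mu `]y, x]%classic)%E.
    rewrite lebesgue_measure_itv /= lte_fin; case: ifP => [_|/negbT].
      by rewrite EFinD.
    rewrite -leNgt => xy; have -> : x = y by apply/eqP; rewrite eq_le xy yx.
    by rewrite subrr.
  have sub : (mu (`]y, x] `|` (U `&` `]x, b])) <= mu (U `&` `]y, b]))%E.
    apply: le_measure; rewrite ?inE; try exact: mUI.
    + by apply: measurableU => //; exact: mUI.
    + exact: sub_auxL.
  apply: le_trans sub.
  rewrite measureU //; first exact: leeD2l.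
  + exact: mUI.
  apply/seteqP; split => // z /= [+ [_]]; rewrite !in_itv /= => /andP[_ zx].
  by move=> /andP[xz _]; move: (lt_le_trans xz zx); rewrite ltxx.
- rewrite big_cons /=.
  have H1 := ler_norm (h x - h y).
  have H2 : - ((c + eps) * (x - y)) <= `|c + eps| * (x - y).
    rewrite -mulNr ler_wpM2r ?subr_ge0 //.
    by rewrite -normrN ler_norm.
  lra.
Qed.


Lemma ac_cont a b h : abs_cont_on a b h -> forall e : R, 0 < e ->
  exists2 d : R, 0 < d & forall s u, a <= s -> s <= u -> u <= b -> u - s < d ->
    `|h u - h s| < e.
Proof.
move=> hac e e0; have [d d0 hd] := hac e e0; exists d => // s u as_ su ub usd.
have := hd 1%N (fun _ => s) (fun _ => u).
rewrite !big_ord1; apply => //.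
by move=> p q; rewrite (ord1 p) (ord1 q) eqxx.
Qed.

Lemma localL a b c eps U h x : open U -> 0 < eps ->
  (forall t, a <= t <= b -> ~ U t -> DqL h t c) -> a <= x <= b ->
  exists2 r, 0 < r & ((forall y, `|x - y| < r -> U y) \/
    (forall y, x - r < y -> y <= x -> h x - h y <= (c + eps) * (x - y))).
Proof.
move=> oU eps0 hD xab; case: (pselect (U x)) => Ux.
  have /nbhs_ballP [r r0 sub] := oU x Ux.
  by exists r => //; left => y xy; apply: sub; rewrite -ball_normE.
have [r r0 sub] := hD x xab Ux eps eps0.
by exists r => //; right.
Qed.

Lemma coreL h a b c eps U e d : a <= b -> 0 < eps -> open U ->
  abs_cont_on a b h ->
  (forall t, a <= t <= b -> ~ U t -> DqL h t c) -> (mu U < d%:E)%E ->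
  (forall L : seq (R * R), pairwise (fun p q => p.2 <= q.1) L ->
    (forall p, p \in L -> a <= p.1 /\ p.1 <= p.2 /\ p.2 <= b) ->
    \sum_(p <- L) (p.2 - p.1) < d -> \sum_(p <- L) `|h p.2 - h p.1| < e) ->
  h b - h a <= (c + eps) * (b - a) + (e + `|c + eps| * d).
Proof.
move=> ab eps0 oU hac hD mU hAC.
have Ia : forall eta, 0 < eta -> InvL b c eps U h eta a.
  pose S := [set x | a <= x <= b /\ forall eta, 0 < eta -> InvL b c eps U h eta x].
  have Sb : S b.
    by split; [rewrite lexx ab | move=> eta eta0; apply: invL_start; exact: ltW].
  have hS : has_inf S by split; [exists b | exists a => x [/andP[]]].
  set xs := inf S.
  have axs : a <= xs by apply: lb_le_inf; [exists b | move=> x [/andP[]]].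
  have xsb : xs <= b by apply: ge_inf => //; case: hS.
  have Ixs : forall eta, 0 < eta -> InvL b c eps U h eta xs.
    move=> eta eta0.
    have [d1 d10 hd1] := ac_cont hac (divr_gt0 eta0 (ltr0n _ 4)).
    pose K := `|c + eps| + 1.
    have K0 : 0 < K by rewrite /K; have := normr_ge0 (c + eps); lra.
    pose r := Num.min d1 (eta / 4 / K).
    have r0 : 0 < r by rewrite /r lt_min d10 !divr_gt0.
    have rd1 : r <= d1 by rewrite /r ge_min lexx.
    have rK : r * K <= eta / 4 by rewrite -ler_pdivlMr // /r ge_min lexx orbT.
    have [s [/andP[as_ sb] Is] lt] := inf_adherent r0 hS.
    rewrite -/xs in lt.
    have xss : xs <= s by apply: ge_inf => //; [case: hS | split => //; rewrite as_ sb].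
    apply: (invL_good oU (Is (eta / 2) (divr_gt0 eta0 (ltr0n _ 2))) xss (eta' := eta / 2)).
      have H1 : `|h s - h xs| < eta / 4 by apply: hd1 => //; lra.
      have H2 : - ((c + eps) * (s - xs)) <= `|c + eps| * (s - xs).
        rewrite -mulNr ler_wpM2r ?subr_ge0 //.
        by rewrite -normrN ler_norm.
      have H3 : `|c + eps| * (s - xs) <= K * r.
        by apply: ler_pM; rewrite ?normr_ge0 ?subr_ge0 // /K; lra.
      have H4 := ler_norm (h s - h xs).
      lra.
    lra.
  case: (ltP a xs) => [axs'|xsa]; last first.
    by have -> : a = xs by apply/eqP; rewrite eq_le axs xsa.
  have [r r0 hr] := @localL a b c eps U h xs oU eps0 hD (introT andP (conj axs xsb)).
  pose y := Num.max (xs - r / 2) a.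
  have yxs : y < xs by rewrite /y gt_max axs' andbT ltrBlDr ltrDl divr_gt0.
  have ay : a <= y by rewrite /y le_max lexx orbT.
  have yr : xs - r / 2 <= y by rewrite /y le_max lexx.
  have Iy : forall eta, 0 < eta -> InvL b c eps U h eta y.
    move=> eta eta0; case: hr => [hU|hG].
      apply: (invL_bad oU (Ixs eta eta0) (ltW yxs) xsb) => z /=.
      rewrite in_itv /= => /andP[yz zxs].
      by apply: hU; rewrite ger0_norm ?subr_ge0 //; lra.
    apply: (invL_good oU (Ixs eta eta0) (ltW yxs) (eta' := 0)); last by lra.
    rewrite addr0; apply: hG => //; [lra | exact: ltW].
  have : xs <= y.
    by apply: ge_inf => //; [case: hS | split => //; rewrite ay (le_trans (ltW yxs) xsb)].
  by rewrite leNgt yxs.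
have main : forall eta, 0 < eta ->
    h b - h a - (c + eps) * (b - a) <= e + `|c + eps| * d + eta.
  move=> eta eta0; case: (Ia eta eta0) => L [pw inL mL ineq].
  have sumlen : \sum_(p <- L) (p.2 - p.1) < d.
    rewrite -lte_fin; apply: le_lt_trans mL _; apply: le_lt_trans mU.
    apply: le_measure.
    + by rewrite inE; exact: mUI.
    + by rewrite inE; exact: open_measurable.
    + by move=> y [].
  have := hAC L pw inL sumlen.
  rewrite big_split /= -mulr_sumr in ineq.
  have : `|c + eps| * \sum_(p <- L) (p.2 - p.1) <= `|c + eps| * d.
    by rewrite ler_wpM2l // ltW.
  lra.
have : h b - h a - (c + eps) * (b - a) <= e + `|c + eps| * d.
  by apply/ler_addgt0Pr => eta eta0; exact: main.
lra.
Qed.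

Lemma monoL h a b c (Z : set R) : a <= b -> abs_cont_on a b h ->
  measurable Z -> mu Z = 0%E ->
  (forall t, a <= t <= b -> ~ Z t -> DqL h t c) -> h b - h a <= c * (b - a).
Proof.
move=> ab hac mZ Z0 hD; apply/ler_addgt0Pr => eta eta0.
pose K := (b - a) + 2 + `|c|.
have K0 : 0 < K by rewrite /K; have := normr_ge0 c; lra.
pose et := Num.min 1 (eta / K).
have et0 : 0 < et by rewrite /et lt_min ltr01 divr_gt0.
have et1 : et <= 1 by rewrite /et ge_min lexx.
have etK : et * K <= eta.
  by rewrite -ler_pdivlMr // /et ge_min lexx orbT.
have [d0 d00 hd0] := ac_list hac et0.
pose d := Num.min d0 et.
have d0' : 0 < d by rewrite /d lt_min d00 et0.
have dd0 : d <= d0 by rewrite /d ge_min lexx.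
have det : d <= et by rewrite /d ge_min lexx orbT.
have Zoo : (mu Z < +oo)%E.
  rewrite [X in (X < _)%E](_ : _ = 0%E); last exact: Z0.
  exact: ltry.
have [U [oU ZU mUZ]] := lebesgue_regularity_outer mZ Zoo d0'.
have mU : (mu U < d%:E)%E.
  rewrite -(setDUK ZU) measureU.
  + rewrite [X in (X + _ < _)%E](_ : _ = 0%E); last exact: Z0.
    by rewrite add0e.
  + exact: mZ.
  + by apply: measurableD => //; exact: open_measurable.
  + by apply/seteqP; split => // y [Zy [_ nZy]].
have H1 : forall t, a <= t <= b -> ~ U t -> DqL h t c.
  by move=> t tab nU; apply: hD => // Zt; apply: nU; apply: ZU.
have H2 : forall L : seq (R * R), pairwise (fun p q => p.2 <= q.1) L ->
    (forall p, p \in L -> a <= p.1 /\ p.1 <= p.2 /\ p.2 <= b) ->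
    \sum_(p <- L) (p.2 - p.1) < d -> \sum_(p <- L) `|h p.2 - h p.1| < et.
  by move=> L pw inL sl; apply: hd0 => //; apply: lt_le_trans sl dd0.
have := @coreL h a b c et U et d ab et0 oU hac H1 mU H2.
have n1 : `|c + et| <= `|c| + et.
  by have := ler_normD c et; rewrite (gtr0_norm et0).
have n2 : `|c + et| * d <= (`|c| + et) * et.
  by apply: ler_pM => //; apply: ltW.
have n3 : (`|c| + et) * et <= (`|c| + 1) * et.
  by apply: ler_wpM2r; [exact: ltW | rewrite lerD2l].
have n4 : (c + et) * (b - a) = c * (b - a) + et * (b - a) by ring.
have : et * K = et * (b - a) + 2 * et + `|c| * et by rewrite /K; ring.
lra.
Qed.
End Core.

Section Der.
Variable R : realType.
Set Implicit Arguments.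
Unset Strict Implicit.

Lemma der_bound (f : R -> R) t v : is_derive t (1 : R) f v ->
  forall e : R, 0 < e -> exists2 r : R, 0 < r &
    forall s, `|t - s| < r -> `|f s - f t - v * (s - t)| <= e * `|s - t|.
Proof.
move=> hd e e0.
have hq : (fun h : R => h^-1 *: ((f \o shift t) (h *: 1) - f t)) @ 0^' --> v.
  by rewrite -(@derive_val _ _ _ t 1 f v hd); exact: (@ex_derive _ _ _ t 1 f v hd).
move/cvgrPdist_le : hq => /(_ e e0).
rewrite near_withinE => /nbhs_ballP [r r0 H]; exists r => // s ts.
have [->|st] := eqVneq s t; first by rewrite !subrr mulr0 subr0 normr0 mulr0.
have hne : s - t != 0 by rewrite subr_eq0.
have := H (s - t); rewrite -ball_normE /= sub0r normrN distrC => /(_ ts hne).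
rewrite /shift /= scaler1 subrK => Hb.
have -> : f s - f t - v * (s - t) = - (s - t) * (v - (s - t)^-1 * (f s - f t)).
  by field.
rewrite normrM normrN mulrC (distrC t s); apply: ler_wpM2r => //; exact: Hb.
Qed.
End Der.

Section Comb.
Variable R : realType.
Set Implicit Arguments.
Unset Strict Implicit.

Lemma count_enum_card (T : finType) (A : {set T}) (P : pred T) :
  count P (enum A) = #|A :&: [set j | P j]|.
Proof.
rewrite cardE (perm_size (enum_setI _ _)) size_filter.
by apply: eq_count => j; rewrite inE.
Qed.

Lemma filter_none (T : Type) (P : pred T) (s : seq T) : all P s ->
  [seq v <- s | ~~ P v] = [::].
Proof. by elim: s => //= a s IH /andP[-> /IH]. Qed.

Lemma sorted_split (s : seq R) (P : pred R) : sorted <=%R s ->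
  (forall v w, v <= w -> P v -> P w) ->
  s = [seq v <- s | ~~ P v] ++ [seq v <- s | P v].
Proof.
move=> ss Pup; elim: s ss => [//|a s IH] /=.
rewrite (path_sortedE le_trans) => /andP[aS ss].
case: (boolP (P a)) => Pa /=.
  have aP : all P s by apply/allP => w ws; apply: (Pup a) => //; exact: (allP aS).
  by rewrite filter_none // (all_filterP aP).
by rewrite -IH.
Qed.

Definition kept (o : R) (F : nat) (s : seq R) :=
  drop (minn (count (fun v => (v < o)%R) s) F)
       (take (size s - minn (count (fun v => (o < v)%R) s) F) s).

Lemma K1 (o : R) (F : nat) (s : seq R) : sorted <=%R s -> (count (fun v => (o < v)%R) s <= F)%N ->
  all (fun v => v <= o) (kept o F s).
Proof.
move=> ss cF; rewrite /kept (minn_idPl cF).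
have sp := @sorted_split s (fun v => (o < v)%R) ss (fun v w vw ov => lt_le_trans ov vw).
set A := [seq v <- s | ~~ (o < v)] in sp.
have szA : size A = (size s - count (fun v => (o < v)%R) s)%N.
  by rewrite size_filter -(count_predC (fun v => (o < v)%R) s) addKn.
have tA : take (size A) s = A by rewrite {1}sp take_size_cat.
rewrite -szA tA; apply/allP => v /mem_drop.
by rewrite mem_filter leNgt => /andP[].
Qed.

Lemma K2 (o : R) (F : nat) (s : seq R) : sorted <=%R s -> (count (fun v => (v < o)%R) s <= F)%N ->
  all (fun v => o <= v) (kept o F s).
Proof.
move=> ss cF; rewrite /kept (minn_idPl cF).
have sp := @sorted_split s (fun v => ~~ (v < o)) ss.
have /sp {}sp : forall v w, v <= w -> ~~ (v < o) -> ~~ (w < o).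
  by move=> v w vw; rewrite -!leNgt => /le_trans; apply.
set A := [seq v <- s | ~~ ~~ (v < o)] in sp.
set B := [seq v <- s | ~~ (v < o)] in sp.
have szA : size A = count (fun v => (v < o)%R) s.
  by rewrite size_filter; apply: eq_count => v; rewrite negbK.
set m := (size s - _)%N.
have tc : take m s = take m (A ++ B) by rewrite {1}sp.
rewrite tc take_cat szA; case: ifP => [lt|_].
  by rewrite drop_oversize // size_take szA; case: ifP => // _; exact: ltnW.
rewrite -szA drop_size_cat //; apply/allP => v /mem_take.
by rewrite mem_filter leNgt => /andP[].
Qed.

Lemma K3 (o : R) (F : nat) (s : seq R) : sorted <=%R s -> (count (fun v => (o < v)%R) s <= F)%N ->
  (F < count (fun v => (v < o)%R) s)%N -> has (fun v => (v < o)%R) (kept o F s).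
Proof.
move=> ss cF cF2; rewrite /kept (minn_idPl cF) (minn_idPr (ltnW cF2)).
have sp := @sorted_split s (fun v => (o < v)%R) ss (fun v w vw ov => lt_le_trans ov vw).
set A := [seq v <- s | ~~ (o < v)] in sp.
set B := [seq v <- s | o < v] in sp.
have szA : size A = (size s - count (fun v => (o < v)%R) s)%N.
  by rewrite size_filter -(count_predC (fun v => (o < v)%R) s) addKn.
have tA : take (size A) s = A by rewrite {1}sp take_size_cat.
rewrite -szA tA.
have cB : count (fun v => (v < o)%R) B = 0%N.
  apply/eqP; rewrite -leqn0 leqNgt -has_count; apply/hasPn => v.
  by rewrite mem_filter => /andP[ov _]; rewrite ltNge (ltW ov).
have cA : count (fun v => (v < o)%R) A = count (fun v => (v < o)%R) s.
  by rewrite {1}sp count_cat cB addn0.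
have := cat_take_drop F A => cat.
have ct : (count (fun v => (v < o)%R) (take F A) <= F)%N.
  apply: leq_trans (count_size _ _) _; rewrite size_take.
  by case: ifP => [//|/negbT]; rewrite -leqNgt.
rewrite has_count.
have : count (fun v => (v < o)%R) A = (count (fun v => (v < o)%R) (take F A) +
   count (fun v => (v < o)%R) (drop F A))%N by rewrite -count_cat cat.
move=> e; rewrite lt0n; apply/negP => /eqP d0.
by move: cF2; rewrite -cA e d0 addn0 ltnNge ct.
Qed.

Lemma K4 (o : R) (F : nat) (s : seq R) : sorted <=%R s -> (count (fun v => (v < o)%R) s <= F)%N ->
  (F < count (fun v => (o < v)%R) s)%N -> has (fun v => (o < v)%R) (kept o F s).
Proof.
move=> ss cF cF2; rewrite /kept (minn_idPl cF) (minn_idPr (ltnW cF2)).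
have sp := @sorted_split s (fun v => ~~ (v < o)) ss.
have /sp {}sp : forall v w, v <= w -> ~~ (v < o) -> ~~ (w < o).
  by move=> v w vw; rewrite -!leNgt => /le_trans; apply.
set A := [seq v <- s | ~~ ~~ (v < o)] in sp.
set B := [seq v <- s | ~~ (v < o)] in sp.
have szA : size A = count (fun v => (v < o)%R) s.
  by rewrite size_filter; apply: eq_count => v; rewrite negbK.
have cA : count (fun v => (o < v)%R) A = 0%N.
  apply/eqP; rewrite -leqn0 leqNgt -has_count; apply/hasPn => v.
  by rewrite mem_filter negbK => /andP[vo _]; rewrite ltNge (ltW vo).
have cB : count (fun v => (o < v)%R) B = count (fun v => (o < v)%R) s.
  by rewrite {1}sp count_cat cA.
have szs : size s = (size A + size B)%N by rewrite {1}sp size_cat.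
have cBs := count_size (fun v => (o < v)%R) B.
set m := (size s - _)%N.
have tc : take m s = take m (A ++ B) by rewrite {1}sp.
rewrite tc take_cat szA.
have -> : (size s - F < count (fun v => (v < o)%R) s)%N = false.
  apply/negbTE; rewrite -leqNgt; lia.
rewrite -szA drop_size_cat //.
set k := (size s - F - size A)%N.
have := cat_take_drop k B => cat.
have cd : (count (fun v => (o < v)%R) (drop k B) <= F)%N.
  apply: leq_trans (count_size _ _) _; rewrite size_drop /k; lia.
rewrite has_count.
have : count (fun v => (o < v)%R) B = (count (fun v => (o < v)%R) (take k B) +
   count (fun v => (o < v)%R) (drop k B))%N by rewrite -count_cat cat.
lia.
Qed.

End Comb.

Section Proto.
Variable R : realType.
Set Implicit Arguments.
Unset Strict Implicit.
Variables (n : nat) (E : rel 'I_n) (N : {set 'I_n}) (F : nat) (alpha : R)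
  (g : R -> R) (x : R -> 'I_n -> R) (y : R -> 'I_n -> 'I_n -> R) (t : R).
Hypothesis alpha0 : 0 < alpha.
Hypothesis gmono : {homo g : a b / a < b}.
Hypothesis Floc : F_local E (~: N) F.

Lemma g_le a b : a <= b -> g a <= g b.
Proof. by rewrite le_eqVlt => /predU1P[->//|/gmono/ltW]. Qed.

Lemma sum_le0 (o : R) (l : seq R) : all (fun v => v <= o) l ->
  \sum_(v <- o :: l) (v - o) <= 0.
Proof.
rewrite big_cons subrr add0r => /allP al.
by rewrite big_seq sumr_le0 // => v /al; rewrite subr_le0.
Qed.

Lemma sum_ge0 (o : R) (l : seq R) : all (fun v => o <= v) l ->
  0 <= \sum_(v <- o :: l) (v - o).
Proof.
rewrite big_cons subrr add0r => /allP al.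
by rewrite big_seq sumr_ge0 // => v /al; rewrite subr_ge0.
Qed.

Lemma sum_lt0 (o : R) (l : seq R) : all (fun v => v <= o) l ->
  has (fun v => v < o) l -> \sum_(v <- o :: l) (v - o) < 0.
Proof.
rewrite big_cons subrr add0r; elim: l => //= a l IH /andP[ao al] /orP[lt|hl].
  rewrite big_cons; have := sum_le0 al; rewrite big_cons subrr add0r => hs.
  have : a - o < 0 by rewrite subr_lt0.
  lra.
rewrite big_cons; have := IH al hl; have : a - o <= 0 by rewrite subr_le0.
lra.
Qed.

Lemma sum_gt0 (o : R) (l : seq R) : all (fun v => o <= v) l ->
  has (fun v => o < v) l -> 0 < \sum_(v <- o :: l) (v - o).
Proof.
rewrite big_cons subrr add0r; elim: l => //= a l IH /andP[ao al] /orP[lt|hl].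
  rewrite big_cons; have := sum_ge0 al; rewrite big_cons subrr add0r => hs.
  have : 0 < a - o by rewrite subr_gt0.
  lra.
rewrite big_cons; have := IH al hl; have : 0 <= a - o by rewrite subr_ge0.
lra.
Qed.

Definition srt i := sort <=%R [seq recv N g x y t i j | j <- enum (in_nbrs E i)].

Lemma input_eq i : ftrc_input E N F alpha g x y t i =
  alpha * Num.sg (\sum_(v <- g (x t i) :: kept (g (x t i)) F (srt i)) (v - g (x t i))).
Proof. by []. Qed.

Lemma srt_sorted i : sorted <=%R (srt i).
Proof. by apply: sort_sorted => a b; exact: le_total. Qed.

Lemma count_srt i (P : pred R) :
  count P (srt i) = #|in_nbrs E i :&: [set j | P (recv N g x y t i j)]|.
Proof. by rewrite count_sort count_map count_enum_card. Qed.

Lemma FlocN i : i \in N -> (#|in_nbrs E i :&: ~: N| <= F)%N.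
Proof. by move=> iN; apply: Floc; rewrite inE negbK. Qed.

Lemma cnt_large i : i \in N -> (forall j, j \in N -> x t j <= x t i) ->
  (count (fun v => (g (x t i) < v)%R) (srt i) <= F)%N.
Proof.
move=> iN hmax; rewrite count_srt; apply: (leq_trans _ (FlocN iN)).
apply: subset_leq_card; apply/fintype.subsetP => j; rewrite !inE => /andP[jA].
rewrite /recv; case: ifP => jN lt; rewrite jA //=.
by have := g_le (hmax j jN); rewrite leNgt lt.
Qed.

Lemma cnt_small i : i \in N -> (forall j, j \in N -> x t i <= x t j) ->
  (count (fun v => (v < g (x t i))%R) (srt i) <= F)%N.
Proof.
move=> iN hmin; rewrite count_srt; apply: (leq_trans _ (FlocN iN)).
apply: subset_leq_card; apply/fintype.subsetP => j; rewrite !inE => /andP[jA].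
rewrite /recv; case: ifP => jN lt; rewrite jA //=.
by have := g_le (hmin j jN); rewrite leNgt lt.
Qed.

Definition Sset i : {set 'I_n} := [set j | (j \in N) && (x t j == x t i)]%SET.

Lemma cnt_reach i (P : pred R) : i \in N ->
  (forall j, j \in N -> x t j != x t i -> P (g (x t j))) ->
  (2 * F + 1 <= #|in_nbrs E i :\: Sset i|)%N ->
  (F < count P (srt i))%N.
Proof.
move=> iN hP hr; rewrite count_srt.
set A := in_nbrs E i :\: Sset i.
have h1 : (#|A :&: N| <= #|in_nbrs E i :&: [set j | P (recv N g x y t i j)]|)%N.
  apply: subset_leq_card; apply/fintype.subsetP => j; rewrite !inE => /andP[/andP[jS jA] jN].
  rewrite jA /recv jN /=; apply: hP => //.
  by move: jS; rewrite jN.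
have h2 : (#|A :\: N| <= F)%N.
  apply: (leq_trans _ (FlocN iN)); apply: subset_leq_card; apply/fintype.subsetP => j.
  by rewrite !inE => /andP[jN /andP[_ ->]].
have h3 := cardsID N A.
have h4 : #|A| = #|in_nbrs E i :\: Sset i| by [].
lia.
Qed.

Lemma input_le0 i : i \in N -> (forall j, j \in N -> x t j <= x t i) ->
  ftrc_input E N F alpha g x y t i <= 0.
Proof.
move=> iN hmax; rewrite input_eq pmulr_rle0 // sgr_le0.
exact/sum_le0/K1/cnt_large/hmax/iN/srt_sorted.
Qed.

Lemma input_ge0 i : i \in N -> (forall j, j \in N -> x t i <= x t j) ->
  0 <= ftrc_input E N F alpha g x y t i.
Proof.
move=> iN hmin; rewrite input_eq pmulr_rge0 // sgr_ge0.
exact/sum_ge0/K2/cnt_small/hmin/iN/srt_sorted.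
Qed.

Lemma input_neg i : i \in N -> (forall j, j \in N -> x t j <= x t i) ->
  (2 * F + 1 <= #|in_nbrs E i :\: Sset i|)%N ->
  ftrc_input E N F alpha g x y t i = - alpha.
Proof.
move=> iN hmax hr; rewrite input_eq ltr0_sg ?mulrN1 //.
apply: sum_lt0; first exact/K1/cnt_large/hmax/iN/srt_sorted.
apply/K3; [exact: srt_sorted | exact: cnt_large | ].
apply: cnt_reach => // j jN ne; apply: gmono.
by rewrite lt_neqAle ne hmax.
Qed.

Lemma input_pos i : i \in N -> (forall j, j \in N -> x t i <= x t j) ->
  (2 * F + 1 <= #|in_nbrs E i :\: Sset i|)%N ->
  ftrc_input E N F alpha g x y t i = alpha.
Proof.
move=> iN hmin hr; rewrite input_eq gtr0_sg ?mulr1 //.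
apply: sum_gt0; first exact/K2/cnt_small/hmin/iN/srt_sorted.
apply/K4; [exact: srt_sorted | exact: cnt_small | ].
apply: cnt_reach => // j jN ne; apply: gmono.
by rewrite lt_neqAle eq_sym ne hmin.
Qed.

End Proto.

Section Glue.
Variable R : realType.
Set Implicit Arguments.
Unset Strict Implicit.
Implicit Types (a b c t : R) (h : R -> R).

Lemma der_DqL (f : R -> R) t v : is_derive t (1 : R) f v ->
  DqL f t v /\ DqL (fun s => - f s) t (- v).
Proof.
move=> hd; split => e e0; have [r r0 hr] := der_bound hd e0; exists r => // s ts st;
  have : `|t - s| < r by rewrite ger0_norm ?subr_ge0 //; lra.
all: move=> /hr; rewrite (distrC s t) [`|t - s|]ger0_norm ?subr_ge0 // ler_norml => /andP[h1 h2].
all: have e1 : (v + e) * (t - s) = v * (t - s) + e * (t - s) by ring.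
all: have e2 : (- v + e) * (t - s) = - (v * (t - s)) + e * (t - s) by ring.
all: have e3 : v * (s - t) = - (v * (t - s)) by ring.
all: lra.
Qed.

Lemma DqL_le (f M : R -> R) t c : (forall s, f s <= M s) -> M t = f t ->
  DqL f t c -> DqL M t c.
Proof.
move=> fM Mt hf e e0; have [r r0 hr] := hf e e0; exists r => // s ts st.
have := hr s ts st; have := fM s; rewrite Mt; lra.
Qed.

Lemma DqL_mono h t c c' : DqL h t c -> c <= c' -> DqL h t c'.
Proof.
move=> hc cc e e0; have [r r0 hr] := hc e e0; exists r => // s ts st.
apply: le_trans (hr s ts st) _; apply: ler_wpM2r; first by rewrite subr_ge0.
by rewrite lerD2r.
Qed.

Lemma DqL_add h1 h2 t c1 c2 : DqL h1 t c1 -> DqL h2 t c2 ->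
  DqL (fun s => h1 s + h2 s) t (c1 + c2).
Proof.
move=> d1 d2 e e0.
have [r1 r10 hr1] := d1 (e / 2) (divr_gt0 e0 (ltr0n _ 2)).
have [r2 r20 hr2] := d2 (e / 2) (divr_gt0 e0 (ltr0n _ 2)).
exists (Num.min r1 r2); first by rewrite lt_min r10 r20.
move=> s; rewrite ltrBlDr -ltrBlDl lt_min => /andP[s1 s2] st.
have := hr1 s (ltac:(lra)) st; have := hr2 s (ltac:(lra)) st.
have -> : (c1 + c2 + e) * (t - s) = (c1 + e / 2) * (t - s) + (c2 + e / 2) * (t - s).
  by field.
lra.
Qed.

Lemma ac_restrict a' a b h : abs_cont_on a b h -> a <= a' ->
  abs_cont_on a' b h.
Proof.
move=> hac aa e e0; have [d d0 hd] := hac e e0; exists d => // k s u hs hdis hsum.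
apply: hd => // p; have [? [? ?]] := hs p; split => //; exact: le_trans aa _.
Qed.

Lemma unif_delta (J : finType) (P : J -> R -> Prop) :
  (forall j d d', 0 < d' -> d' <= d -> P j d -> P j d') ->
  (forall j, exists2 d, 0 < d & P j d) ->
  exists2 d, 0 < d & forall j, P j d.
Proof.
move=> anti hP.
suff : forall l : seq J, exists2 d, 0 < d & forall j, j \in l -> P j d.
  by case/(_ (enum J)) => d d0 hd; exists d => // j; apply: hd; rewrite mem_enum.
elim => [|j l [d d0 hd]]; first by exists 1.
have [dj dj0 hdj] := hP j.
exists (Num.min d dj); first by rewrite lt_min d0 dj0.
move=> j'; rewrite inE => /predU1P[->|jl].
  by apply: anti hdj; rewrite ?lt_min ?d0 ?dj0 // ge_min lexx orbT.
by apply: (anti _ d); rewrite ?lt_min ?d0 ?dj0 ?ge_min ?lexx //; exact: hd.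
Qed.

Lemma ac_comb a b (H : R -> R) (K : R) (J : finType) (f : J -> R -> R) :
  0 < K -> (forall j, abs_cont_on a b (f j)) ->
  (forall s u, `|H u - H s| <= K * \sum_j `|f j u - f j s|) ->
  abs_cont_on a b H.
Proof.
move=> K0 hac hb e e0.
pose e' := e / (K * (#|J|%:R + 1)).
have e'0 : 0 < e' by rewrite divr_gt0 // mulr_gt0 // ltr_wpDl // ler0n.
have [d d0 hd] := @unif_delta J (fun j d => forall (k : nat) (s u : 'I_k -> R),
    (forall p, a <= s p /\ s p <= u p /\ u p <= b) ->
    (forall p q, p != q -> u p <= s q \/ u q <= s p) ->
    \sum_p (u p - s p) < d -> \sum_p `|f j (u p) - f j (s p)| < e')
  (fun j d d' d'0 dd hP k s u q1 q2 q3 => hP k s u q1 q2 (lt_le_trans q3 dd))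
  (fun j => hac j e' e'0).
exists d => // k s u q1 q2 q3.
have E1 : \sum_(p : 'I_k) `|H (u p) - H (s p)| <=
    \sum_(p : 'I_k) (K * \sum_j `|f j (u p) - f j (s p)|).
  by apply: ler_sum => p _; exact: hb.
apply: (le_lt_trans E1).
rewrite -mulr_sumr exchange_big /=.
have : \sum_j \sum_p `|f j (u p) - f j (s p)| <= #|J|%:R * e'.
  apply: (le_trans (y := \sum_(j : J) e')); last by rewrite sumr_const mulr_natl.
  apply: ler_sum => j _; apply: ltW; exact: hd.
have eK : K * (#|J|%:R * e') < e.
  have c0 : 0 < #|J|%:R + 1 :> R by rewrite ltr_wpDl // ler0n.
  have -> : K * (#|J|%:R * e') = e - e / (#|J|%:R + 1).
    rewrite /e'; field.
    by rewrite (gt_eqF K0) (gt_eqF c0).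
  by rewrite gtrBl divr_gt0.
move=> hs; apply: le_lt_trans eK; apply: ler_wpM2l; [exact: ltW | exact: hs].
Qed.

Lemma bigmax_ge (s : seq R) x0 a : a \in s -> a <= \big[Num.max/x0]_(b <- s) b.
Proof.
elim: s => //= b s IH; rewrite inE big_cons => /predU1P[->|/IH as_].
  by rewrite le_max lexx.
by rewrite le_max as_ orbT.
Qed.

Lemma bigmin_le (s : seq R) x0 a : a \in s -> \big[Num.min/x0]_(b <- s) b <= a.
Proof.
elim: s => //= b s IH; rewrite inE big_cons => /predU1P[->|/IH as_].
  by rewrite ge_min lexx.
by rewrite ge_min as_ orbT.
Qed.

Lemma bigmax_in (s : seq R) x0 : \big[Num.max/x0]_(b <- s) b \in x0 :: s.
Proof.
elim: s => [|b s IH]; first by rewrite big_nil mem_head.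
rewrite big_cons; set r := \big[_/_]_(_ <- _) _ in IH *.
have [->|->] : Num.max b r = b \/ Num.max b r = r.
  by rewrite /Order.max; case: ifP; [right|left].
  by rewrite !inE eqxx orbT.
by move: IH; rewrite !inE => /orP[->|->]; rewrite ?orbT.
Qed.

Lemma bigmin_in (s : seq R) x0 : \big[Num.min/x0]_(b <- s) b \in x0 :: s.
Proof.
elim: s => [|b s IH]; first by rewrite big_nil mem_head.
rewrite big_cons; set r := \big[_/_]_(_ <- _) _ in IH *.
have [->|->] : Num.min b r = b \/ Num.min b r = r.
  by rewrite /Order.min; case: ifP; [left|right].
  by rewrite !inE eqxx orbT.
by move: IH; rewrite !inE => /orP[->|->]; rewrite ?orbT.
Qed.

Lemma Mvec_ge (S : finType) (v : {ffun S -> R}) i : v i <= Mvec v.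
Proof. by apply: bigmax_ge; exact: codom_f. Qed.

Lemma mvec_le (S : finType) (v : {ffun S -> R}) i : mvec v <= v i.
Proof. by apply: bigmin_le; exact: codom_f. Qed.

Lemma Mvec_in (S : finType) (v : {ffun S -> R}) (i0 : S) : exists i, Mvec v = v i.
Proof.
have : Mvec v \in codom v.
  have := bigmax_in (codom v) (head 0 (codom v)); rewrite /Mvec inE => /orP[|//].
  have : v i0 \in codom v by exact: codom_f.
  by case: (codom v) => //= a l _ /eqP ->; rewrite mem_head.
by move=> /codomP [i ->]; exists i.
Qed.

Lemma mvec_in (S : finType) (v : {ffun S -> R}) (i0 : S) : exists i, mvec v = v i.
Proof.
have : mvec v \in codom v.
  have := bigmin_in (codom v) (head 0 (codom v)); rewrite /mvec inE => /orP[|//].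
  have : v i0 \in codom v by exact: codom_f.
  by case: (codom v) => //= a l _ /eqP ->; rewrite mem_head.
by move=> /codomP [i ->]; exists i.
Qed.

Lemma Vvec_empty (S : finType) (v : {ffun S -> R}) : #|S| = 0%N -> Vvec v = 0.
Proof.
move=> S0; have : codom v = [::] by apply/eqP; rewrite -size_eq0 size_codom S0.
by rewrite /Vvec /Mvec /mvec => ->; rewrite !big_nil subrr.
Qed.

Lemma term_le_sum (J : finType) (G : J -> R) j : (forall j, 0 <= G j) ->
  G j <= \sum_j G j.
Proof.
move=> G0; rewrite (bigD1 j) //= lerDl; apply: sumr_ge0 => i _; exact: G0.
Qed.

Lemma maxbound (J : finType) (f : J -> R -> R) (M : R -> R) :
  (forall s j, f j s <= M s) -> (forall s, exists j, M s = f j s) ->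
  forall s v, `|M v - M s| <= \sum_j `|f j v - f j s|.
Proof.
move=> hge hin s v; rewrite ler_norml; apply/andP; split.
  have [j Ms] := hin s; have := hge v j.
  have := @term_le_sum J (fun j => `|f j v - f j s|) j (fun _ => normr_ge0 _).
  have := ler_norm (f j s - f j v); rewrite distrC; lra.
have [j Mv] := hin v; have := hge s j.
have := @term_le_sum J (fun j => `|f j v - f j s|) j (fun _ => normr_ge0 _).
have := ler_norm (f j v - f j s); lra.
Qed.

End Glue.

Theorem theorem5 (R : realType) (n : nat) (E : rel 'I_n) (N : {set 'I_n})
    (alpha : R) (F : nat) (g : R -> R) :
  (2 <= n)%N ->
  irreflexive E ->
  0 < alpha ->
  {homo g : a b / a < b} ->
  F_local E (~: N) F ->
  r_robust E (2 * F + 1) ->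
  forall y : R -> 'I_n -> 'I_n -> R,
    (forall i k, i \in N -> k \notin N ->
       lebesgue_measurable_fun `[0%R, +oo[ (fun t => g (y t i k))) ->
  forall x : R -> 'I_n -> R,
    ftrc_trajectory E N F alpha g y x ->
    (forall t : R, 0 <= t -> forall i, i \in N ->
       mvec (stateN N x 0) <= x t i <= Mvec (stateN N x 0)) /\
    (exists T : {ffun normal_agent N -> R} -> R,
       (forall z, 0 <= T z) /\
       forall t : R, T (stateN N x 0) <= t -> Vvec (stateN N x t) = 0).
Proof.
move=> n2 irr alpha0 gmono Floc rob y ymeas x traj.
pose u t i := ftrc_input E N F alpha g x y t i.
pose M t := Mvec (stateN N x t).
pose m t := mvec (stateN N x t).
have hMge : forall t i, i \in N -> x t i <= M t.
  by move=> t i iN; have := Mvec_ge (stateN N x t) (exist _ i iN); rewrite ffunE.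
have hmle : forall t i, i \in N -> m t <= x t i.
  by move=> t i iN; have := mvec_le (stateN N x t) (exist _ i iN); rewrite ffunE.
case: (set_0Vmem N) => [N0|[i0 i0N]].
  split; first by move=> t _ i; rewrite N0 inE.
  exists (fun _ => 0); split => // t _; apply: Vvec_empty.
  by rewrite card_sig; apply: eq_card0 => i; rewrite /= N0 inE.
have hMin : forall t, exists2 i, i \in N & M t = x t i.
  move=> t; rewrite /M; have [[i iN] ->] := Mvec_in (stateN N x t) (exist _ i0 i0N).
  by exists i => //; rewrite ffunE.
have hmin : forall t, exists2 i, i \in N & m t = x t i.
  move=> t; rewrite /m; have [[i iN] ->] := mvec_in (stateN N x t) (exist _ i0 i0N).
  by exists i => //; rewrite ffunE.
have aeF : Filter (almost_everywhere (@lebesgue_measure R)).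
  exact: ae_filter_ringOfSetsType.
have hae : \forall t \ae (@lebesgue_measure R), forall j : normal_agent N,
    (0 : R) < t -> is_derive t (1 : R) (fun s => x s (sval j)) (u t (sval j)).
  by apply: (@filter_forall _ _ _ _ aeF) => j; exact: (traj _ (svalP j)).2.
have h0 : \forall t \ae (@lebesgue_measure R), t != 0.
  exists [set 0]; split; [exact: measurable_set1 | exact: lebesgue_measure_set1 |].
  by move=> t /= /negP; rewrite negbK => /eqP.
have [Z [mZ Z0 hZ]] : \forall t \ae (@lebesgue_measure R), t != 0 /\
    forall j : normal_agent N,
    (0 : R) < t -> is_derive t (1 : R) (fun s => x s (sval j)) (u t (sval j)).
  by apply: (@filterS2 _ _ aeF _ _ _ _ h0 hae) => t ? ?; split.
have good : forall t, ~ Z t -> t != 0 /\ forall j : normal_agent N,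
    (0 : R) < t -> is_derive t (1 : R) (fun s => x s (sval j)) (u t (sval j)).
  move=> t nZ; case: (pselect (t != 0 /\ forall j : normal_agent N,
    (0 : R) < t -> is_derive t (1 : R) (fun s => x s (sval j)) (u t (sval j)))) => // nP.
  by exfalso; apply: nZ; apply: hZ.
have dq : forall t, 0 <= t -> ~ Z t -> forall i, i \in N ->
    DqL (fun s => x s i) t (u t i) /\ DqL (fun s => - x s i) t (- u t i).
  move=> t t0 nZ i iN; have [tn0 hd] := good t nZ; apply: der_DqL.
  by apply: (hd (exist _ i iN)); rewrite lt_neqAle eq_sym tn0 t0.
have acx : forall i, i \in N -> forall b, 0 <= b -> abs_cont_on 0 b (fun s => x s i).
  by move=> i iN; exact: (traj i iN).1.
have bM : forall s v, `|M v - M s| <= \sum_(j : normal_agent N) `|x v (sval j) - x s (sval j)|.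
  apply: (@maxbound R (normal_agent N) (fun j s => x s (sval j)) M).
    by move=> s j; exact: (hMge s (sval j) (svalP j)).
  by move=> s; have [i iN ->] := hMin s; exists (exist _ i iN).
have bm : forall s v, `|(- m v) - (- m s)| <=
    \sum_(j : normal_agent N) `|x v (sval j) - x s (sval j)|.
  move=> s v; apply: le_trans (@maxbound R (normal_agent N) (fun j s => - x s (sval j))
     (fun s => - m s) _ _ s v) _.
  - by move=> s' j; rewrite lerN2; exact: (hmle s' (sval j) (svalP j)).
  - by move=> s'; have [i iN ->] := hmin s'; exists (exist _ i iN).
  - by apply: ler_sum => j _; rewrite -opprD normrN.
have acM : forall b, 0 <= b -> abs_cont_on 0 b M.
  move=> b b0; apply: (@ac_comb R 0 b M 1 (normal_agent N) (fun j s => x s (sval j))).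
  - exact: ltr01.
  - by move=> j; exact: (acx _ (svalP j) b b0).
  - by move=> s v; rewrite mul1r; exact: bM.
have acm : forall b, 0 <= b -> abs_cont_on 0 b (fun s => - m s).
  move=> b b0; apply: (@ac_comb R 0 b _ 1 (normal_agent N) (fun j s => x s (sval j))).
  - exact: ltr01.
  - by move=> j; exact: (acx _ (svalP j) b b0).
  - by move=> s v; rewrite mul1r; exact: bm.
have acV : forall b, 0 <= b -> abs_cont_on 0 b (fun s => M s + - m s).
  move=> b b0; apply: (@ac_comb R 0 b _ 2 (normal_agent N) (fun j s => x s (sval j))).
  - by [].
  - by move=> j; exact: (acx _ (svalP j) b b0).
  - move=> s v; have := bM s v; have := bm s v.
    have := ler_normD (M v - M s) (- m v - - m s).
    have -> : M v + - m v - (M s + - m s) = (M v - M s) + (- m v - - m s) by ring.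
    lra.
have dqM0 : forall t, 0 <= t -> ~ Z t -> DqL M t 0.
  move=> t t0 nZ; have [i iN Mt] := hMin t.
  apply: (@DqL_mono R M t (u t i)); last first.
    by apply: (input_le0 y alpha0 gmono Floc iN) => j jN; rewrite -Mt; exact: hMge.
  exact: (@DqL_le R (fun s => x s i) M t (u t i) (fun s => hMge s i iN) Mt
    (dq t t0 nZ i iN).1).
have dqm0 : forall t, 0 <= t -> ~ Z t -> DqL (fun s => - m s) t 0.
  move=> t t0 nZ; have [i iN mt] := hmin t.
  apply: (@DqL_mono R _ t (- u t i)); last first.
    rewrite oppr_le0.
    by apply: (input_ge0 y alpha0 gmono Floc iN) => j jN; rewrite -mt; exact: hmle.
  have h1 : forall s, - x s i <= - m s by move=> s; rewrite lerN2; exact: hmle.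
  have h2 : - m t = - x t i by rewrite mt.
  exact: (@DqL_le R (fun s => - x s i) (fun s => - m s) t (- u t i) h1 h2
    (dq t t0 nZ i iN).2).
have Mdec : forall a b, 0 <= a -> a <= b -> M b - M a <= 0.
  move=> a b a0 ab.
  have := @monoL R M a b 0 Z ab (ac_restrict (acM b (le_trans a0 ab)) a0) mZ Z0.
  rewrite mul0r; apply => t /andP[aT tb] nZ; apply: dqM0 => //; exact: le_trans aT.
have mdec : forall a b, 0 <= a -> a <= b -> - m b - - m a <= 0.
  move=> a b a0 ab.
  have := @monoL R (fun s => - m s) a b 0 Z ab (ac_restrict (acm b (le_trans a0 ab)) a0) mZ Z0.
  rewrite mul0r; apply => t /andP[aT tb] nZ; apply: dqm0 => //; exact: le_trans aT.
split.
  move=> t t0 i iN; have := Mdec 0 t (lexx 0) t0; have := mdec 0 t (lexx 0) t0.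
  have := hMge t i iN; have := hmle t i iN; rewrite /M /m => h1 h2 h3 h4.
  apply/andP; split; lra.
have Vge : forall t, 0 <= M t - m t.
  move=> t; have [i iN _] := hMin t; have := hMge t i iN; have := hmle t i iN; lra.
exists (fun z => `|Vvec z| / alpha); split; first by move=> z; rewrite divr_ge0 // ltW.
move=> t1 Tt1.
have V0e : Vvec (stateN N x 0) = M 0 - m 0 by [].
rewrite V0e ger0_norm ?Vge // in Tt1.
have t10 : 0 <= t1 by apply: le_trans Tt1; rewrite divr_ge0 // ltW.
change (M t1 - m t1 = 0).
apply/eqP; rewrite eq_le (Vge t1) andbT leNgt; apply/negP => Vpos.
have dqV : forall r, 0 <= r <= t1 -> ~ Z r -> DqL (fun s => M s + - m s) r (- alpha).
  move=> r /andP[r0 rt1] nZ.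
  have Vr : 0 < M r - m r.
    have := Mdec r t1 r0 rt1; have := mdec r t1 r0 rt1; lra.
  have [iM iMN Mr] := hMin r; have [im imN mr] := hmin r.
  pose S1 := Sset N x r iM; pose S2 := Sset N x r im.
  have S1n : S1 != finset.set0 by apply/set0Pn; exists iM; rewrite inE iMN eqxx.
  have S2n : S2 != finset.set0 by apply/set0Pn; exists im; rewrite inE imN eqxx.
  have dis : fintype.disjoint (mem S1) (mem S2).
    rewrite -setI_eq0; apply/eqP/setP => j; rewrite !inE.
    apply/negP => /andP[/andP[_ /eqP e1] /andP[_ /eqP e2]].
    by move: Vr; rewrite Mr mr -e1 -e2 subrr ltxx.
  case: (rob S1 S2 S1n S2n dis) => [[i iS hi]|[i iS hi]].
  - move: iS; rewrite inE => /andP[iN /eqP xi].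
    have SE : Sset N x r i = S1 by apply/setP => j; rewrite !inE xi.
    have hmax : forall j, j \in N -> x r j <= x r i.
      by move=> j jN; rewrite xi -Mr; exact: hMge.
    have ui : u r i = - alpha.
      by apply: (input_neg y alpha0 gmono Floc iN hmax); rewrite SE.
    have dM : DqL M r (- alpha).
      rewrite -ui; apply: (@DqL_le R (fun s => x s i) M r (u r i) (fun s => hMge s i iN)).
        by rewrite Mr xi.
      exact: (dq r r0 nZ i iN).1.
    by have := DqL_add dM (dqm0 r r0 nZ); rewrite addr0.
  - move: iS; rewrite inE => /andP[iN /eqP xi].
    have SE : Sset N x r i = S2 by apply/setP => j; rewrite !inE xi.
    have hmn : forall j, j \in N -> x r i <= x r j.
      by move=> j jN; rewrite xi -mr; exact: hmle.
    have ui : u r i = alpha.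
      by apply: (input_pos y alpha0 gmono Floc iN hmn); rewrite SE.
    have dm : DqL (fun s => - m s) r (- alpha).
      rewrite -ui.
      have h1 : forall s, - x s i <= - m s by move=> s; rewrite lerN2; exact: hmle.
      have h2 : - m r = - x r i by rewrite mr xi.
      exact: (@DqL_le R (fun s => - x s i) (fun s => - m s) r (- u r i) h1 h2
        (dq r r0 nZ i iN).2).
    by have := DqL_add (dqM0 r r0 nZ) dm; rewrite add0r.
have := @monoL R (fun s => M s + - m s) 0 t1 (- alpha) Z t10 (acV t1 t10) mZ Z0 dqV.
have : M 0 - m 0 <= t1 * alpha by rewrite -ler_pdivrMr.
have -> : - alpha * (t1 - 0) = - (t1 * alpha) by ring.
lra.
Qed.
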